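(* Let $v\ge1$, $n\ge1$, $\epsilon>0$. Let $(Q,\hat P_n)$ and $(Q',\hat P_n')$ be RPBD schemes with parameters $(v,b,r,\lambda,\epsilon)$ and $(v,b',r',\lambda',\epsilon)$, respectively. Then the two schemes are marginally equivalent if and only if there exists a constant $t>0$ such that $(b',r',\lambda')=t(b,r,\lambda)$.
   Context: $\mathcal{X}=\{1,\dots,v\}$, $\Delta_v$ the probability vectors on $\mathcal{X}$. For $\mathcal{I}\subset\mathcal{X}\times\mathcal{Y}$, $\mathcal{I}_x=\{y:(x,y)\in\mathcal{I}\}$. For integers $v>0$, $b>r>\lambda\ge0$, a $(v,b,r,\lambda)$-RPBD is an incidence structure $(\mathcal{X},\mathcal{Y},\mathcal{I})$ with $\mathcal{Y}$ finite nonempty, $|\mathcal{Y}|=b$, $|\mathcal{I}_x|=r$ for all $x$, $|\mathcal{I}_x\cap\mathcal{I}_{x'}|=\lambda$ for all $x\neq x'$. An RPBD scheme with parameters $(v,b,r,\lambda,\epsilon)$ consists of such an RPBD, the mechanism $Q(y|x)=\alpha e^\epsilon$ if $(x,y)\in\mathcal{I}$ and $\alpha$ otherwise, $\alpha=1/(re^\epsilon+b-r)$, and the estimator $\hat P_{n,x}(Y_1,\dots,Y_n)=\frac{1}{(r-\lambda)(e^\epsilon-1)}\left(\frac{N_x}{n\alpha}-(\lambda e^\epsilon+r-\lambda)\right)$, $N_x=\sum_{i=1}^n\mathbb{1}(Y_i\in\mathcal{I}_x)$. Two schemes are marginally equivalent if, with $X_1,\dots,X_n$ i.i.d. $\sim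 P$, $Y_i\sim Q(\cdot|X_i)$, $Y_i'\sim Q'(\cdot|X_i)$, one has $\hat P_{n,x}(Y_1,\dots,Y_n)\overset{d}{=}\hat P'_{n,x}(Y_1',\dots,Y_n')$ for all $x\in\mathcal{X}$ and $P\in\Delta_v$. *)

(* Defs.v *)
From mathcomp Require Import all_boot all_order all_algebra.
From mathcomp Require Import all_classical all_reals.
From mathcomp Require Import sequences exp.
Set Implicit Arguments. Unset Strict Implicit. Unset Printing Implicit Defensive.
Import Order.TTheory GRing.Theory Num.Theory.
Local Open Scope ring_scope.

(* X = {1..v} is represented by 'I_v. *)

Definition Isec (v : nat) (Y : finType) (I : {set 'I_v * Y}) (x : 'I_v) : {set Y} :=
  [set y | (x, y) \in I].

Definition is_RPBD (v b r l : nat) (Y : finType) (I : {set 'I_v * Y}) : Prop :=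
  [/\ [/\ (0 < v)%N, (l < r)%N & (r < b)%N], #|Y| = b,
      (forall x : 'I_v, #|Isec I x| = r) &
      (forall x x' : 'I_v, x != x' -> #|Isec I x :&: Isec I x'| = l)].


Definition rpbd_alpha (R : realType) (b r : nat) (eps : R) : R :=
  1 / (r%:R * expR eps + b%:R - r%:R).

Definition rpbd_Q (R : realType) (v b r : nat) (eps : R) (Y : finType) (I : {set 'I_v * Y})
  (x : 'I_v) (y : Y) : R :=
  if (x, y) \in I then @rpbd_alpha R b r eps * expR eps else @rpbd_alpha R b r eps.

Definition rpbd_N (v n : nat) (Y : finType) (I : {set 'I_v * Y})
  (x : 'I_v) (ys : {ffun 'I_n -> Y}) : nat :=
  #|[set i : 'I_n | ys i \in Isec I x]|.

Definition rpbd_est (R : realType) (v n b r l : nat) (eps : R) (Y : finType) (I : {set 'I_v * Y})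
  (x : 'I_v) (ys : {ffun 'I_n -> Y}) : R :=
  1 / ((r%:R - l%:R) * (expR eps - 1)) *
  ((@rpbd_N v n Y I x ys)%:R / (n%:R * @rpbd_alpha R b r eps)
   - (l%:R * expR eps + r%:R - l%:R)).

Definition prob_vec (R : realType) (v : nat) (P : {ffun 'I_v -> R}) : Prop :=
  (forall x, 0 <= P x) /\ \sum_(x : 'I_v) P x = 1.

(* Law of the (finitely supported) random variable \hat P_{n,x}(Y_1..Y_n),
   where X_1..X_n iid ~ P and Y_i ~ Q(.|X_i): mass at each real z. *)
Definition est_law (R : realType) (v n b r l : nat) (eps : R) (Y : finType) (I : {set 'I_v * Y})
  (P : {ffun 'I_v -> R}) (x : 'I_v) (z : R) : R :=
  \sum_(xs : {ffun 'I_n -> 'I_v}) \sum_(ys : {ffun 'I_n -> Y})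
     (\prod_(i < n) (P (xs i) * @rpbd_Q R v b r eps Y I (xs i) (ys i))) *
     (@rpbd_est R v n b r l eps Y I x ys == z)%:R.

Definition marg_equiv (R : realType) (v n : nat) (eps : R)
  (Y : finType) (I : {set 'I_v * Y}) (b r l : nat)
  (Y' : finType) (I' : {set 'I_v * Y'}) (b' r' l' : nat) : Prop :=
  forall (P : {ffun 'I_v -> R}), @prob_vec R v P ->
  forall (x : 'I_v) (z : R),
    @est_law R v n b r l eps Y I P x z = @est_law R v n b' r' l' eps Y' I' P x z.

(* Main.v *)
Require Import Defs.
From mathcomp Require Import all_boot all_order all_algebra.
From mathcomp Require Import all_classical all_reals.
From mathcomp Require Import sequences exp.
From mathcomp Require Import ring lra.
Set Implicit Arguments. Unset Strict Implicit.
Import Order.TTheory GRing.Theory Num.Theory.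
Local Open Scope ring_scope.

Lemma prod_ind (R : realType) (n : nat) (f : 'I_n -> bool) (bs : {ffun 'I_n -> bool}) :
  \prod_(i < n) (((f i == bs i) : bool)%:R : R) = ((finfun f == bs) : bool)%:R.
Proof.
have [<-|ne] := eqVneq (finfun f) bs.
  by rewrite big1 // => i _; rewrite ffunE eqxx.
have [i Hi] : exists i, f i != bs i.
  apply/existsP; rewrite -negb_forall; apply: contra ne => /forallP H.
  by apply/eqP/ffunP => i; rewrite ffunE; apply/eqP/H.
by rewrite (bigD1 i) //= (negbTE Hi) mul0r.
Qed.

Lemma ys_to_bs (R : realType) (n : nat) (Y : finType) (W : Y -> R) (S : {set Y}) (h : nat -> R) :
  \sum_(ys : {ffun 'I_n -> Y}) (\prod_(i < n) W (ys i)) * h #|[set i | ys i \in S]| =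
  \sum_(bs : {ffun 'I_n -> bool})
     (\prod_(i < n) \sum_(y : Y) W y * (((y \in S) == bs i) : bool)%:R) * h #|[set i | bs i]|.
Proof.
under [RHS]eq_bigr => bs _ do rewrite bigA_distr_bigA /= mulr_suml.
rewrite [RHS]exchange_big /=; apply: eq_bigr => ys _.
have E : forall bs : {ffun 'I_n -> bool}, \prod_(i < n) (W (ys i) * (((ys i \in S) == bs i) : bool)%:R) =
   (\prod_(i < n) W (ys i)) * ((finfun (fun i => ys i \in S) == bs) : bool)%:R.
  by move=> bs; rewrite -prod_ind -big_split.
rewrite [RHS](eq_bigr (fun bs => (\prod_(i < n) W (ys i)) * ((finfun (fun i => ys i \in S) == bs) : bool)%:R * h #|[set i | bs i]|)); last first.
  by move=> bs _; congr (_ * _); exact: E.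
rewrite (bigD1 [ffun i => ys i \in S]) //= eqxx mulr1 [X in _ + X]big1 ?addr0.
  by congr (_ * h _); apply: eq_card => i; rewrite !inE ffunE.
by move=> bs /negbTE; rewrite eq_sym => ->; rewrite mulr0 mul0r.
Qed.

Lemma xs_collapse (R : realType) (n v : nat) (Y : finType) (P : {ffun 'I_v -> R})
  (Q : 'I_v -> Y -> R) (h : {ffun 'I_n -> Y} -> R) :
  \sum_(xs : {ffun 'I_n -> 'I_v}) \sum_(ys : {ffun 'I_n -> Y})
     (\prod_(i < n) (P (xs i) * Q (xs i) (ys i))) * h ys =
  \sum_(ys : {ffun 'I_n -> Y}) (\prod_(i < n) \sum_(x : 'I_v) P x * Q x (ys i)) * h ys.
Proof.
rewrite exchange_big /=; apply: eq_bigr => ys _.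
rewrite -mulr_suml; congr (_ * _).
by rewrite bigA_distr_bigA.
Qed.

Lemma sum_if (R : realType) (Y : finType) (A B : {set Y}) (u w : R) :
  \sum_(y in A) (if y \in B then u else w) =
  u * (#|A :&: B|)%:R + w * (#|A| - #|A :&: B|)%:R.
Proof.
rewrite (big_setID B) /=.
rewrite (eq_bigr (fun=> u)); last by move=> y; rewrite inE => /andP[_ ->].
rewrite [X in _ + X](eq_bigr (fun=> w)); last by move=> y; rewrite inE => /andP[/negbTE ->].
by rewrite !sumr_const cardsD !mulr_natr.
Qed.

Definition qin (R : realType) (v b r : nat) (eps : R) (Y : finType) (I : {set 'I_v * Y})
  (x x2 : 'I_v) : R := \sum_(y in Isec I x) @rpbd_Q R v b r eps Y I x2 y.

Definition phi (R : realType) (n b r l : nat) (eps : R) (k : nat) : R :=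
  1 / ((r%:R - l%:R) * (expR eps - 1)) *
  (k%:R / (n%:R * @rpbd_alpha R b r eps) - (l%:R * expR eps + r%:R - l%:R)).

Lemma Q_if (R : realType) (v b r : nat) (eps : R) (Y : finType) (I : {set 'I_v * Y}) x y :
  @rpbd_Q R v b r eps Y I x y =
  if y \in Isec I x then rpbd_alpha b r eps * expR eps else rpbd_alpha b r eps.
Proof. by rewrite /rpbd_Q /Isec inE. Qed.

Lemma Qsum (R : realType) (v b r l : nat) (eps : R) (Y : finType) (I : {set 'I_v * Y}) x :
  0 < eps -> is_RPBD b r l I -> \sum_y @rpbd_Q R v b r eps Y I x y = 1.
Proof.
move=> he [[_ hlr hrb] hY hr _].
have -> : \sum_y rpbd_Q b r eps I x y = \sum_(y in [set: Y]) rpbd_Q b r eps I x y.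
  by apply: eq_bigl => y; rewrite inE.
under eq_bigr => y _ do rewrite Q_if.
rewrite sum_if finset.setTI finset.cardsT hY hr natrB; last exact: ltnW.
have e1 := pexpR_gt1 he.
have hd : r%:R * expR eps + b%:R - r%:R != 0 :> R.
  have : (r%:R : R) < b%:R by rewrite ltr_nat.
  move=> H; apply/eqP => H2. have : (0:R) <= r%:R by []. nra.
rewrite /rpbd_alpha; field. exact: hd.
Qed.

Lemma qin_val (R : realType) (v b r l : nat) (eps : R) (Y : finType) (I : {set 'I_v * Y}) x x2 :
  is_RPBD b r l I ->
  @qin R v b r eps Y I x x2 =
  rpbd_alpha b r eps * ((if x2 == x then r else l)%:R * expR eps + r%:R - (if x2 == x then r else l)%:R).
Proof.
move=> [[_ hlr hrb] hY hr hl].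
rewrite /qin; under eq_bigr => y _ do rewrite Q_if.
rewrite sum_if hr.
have [->|ne] := eqVneq x2 x.
  by rewrite finset.setIid hr subnn; ring.
rewrite hl ?(eq_sym x) // natrB; last exact: ltnW.
ring.
Qed.

Definition wt (R : realType) (v b r : nat) (eps : R) (Y : finType) (I : {set 'I_v * Y})
  (P : {ffun 'I_v -> R}) (x : 'I_v) (be : bool) : R :=
  \sum_(y : Y) (\sum_(x2 : 'I_v) P x2 * @rpbd_Q R v b r eps Y I x2 y) *
     (((y \in Isec I x) == be) : bool)%:R.

Lemma law_form (R : realType) (v n b r l : nat) (eps : R) (Y : finType) (I : {set 'I_v * Y})
  (P : {ffun 'I_v -> R}) (x : 'I_v) (z : R) :
  @est_law R v n b r l eps Y I P x z =
  \sum_(bs : {ffun 'I_n -> bool})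
     (\prod_(i < n) wt b r eps I P x (bs i)) * ((phi n b r l eps #|[set i | bs i]| == z) : bool)%:R.
Proof.
rewrite /est_law xs_collapse.
have := @ys_to_bs R n Y (fun y => \sum_(x2 : 'I_v) P x2 * @rpbd_Q R v b r eps Y I x2 y) (Isec I x) (fun k => ((phi n b r l eps k == z) : bool)%:R).
move=> ->. done.
Qed.

Lemma wt_true (R : realType) (v b r : nat) (eps : R) (Y : finType) (I : {set 'I_v * Y})
  (P : {ffun 'I_v -> R}) (x : 'I_v) :
  wt b r eps I P x true = \sum_(x2 : 'I_v) P x2 * @qin R v b r eps Y I x x2.
Proof.
rewrite /wt /qin.
rewrite (eq_bigr (fun y => \sum_(x2 : 'I_v) P x2 * @rpbd_Q R v b r eps Y I x2 y * ((y \in Isec I x) : bool)%:R)); last by move=> y _; rewrite eqb_id mulr_suml.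
rewrite exchange_big /=; apply eq_bigr => x2 _.
rewrite mulr_sumr [RHS]big_mkcond /=; apply eq_bigr => y _.
by case: ifP => _; rewrite ?mulr1 ?mulr0.
Qed.

Lemma wt_false (R : realType) (v b r l : nat) (eps : R) (Y : finType) (I : {set 'I_v * Y})
  (P : {ffun 'I_v -> R}) (x : 'I_v) :
  0 < eps -> is_RPBD b r l I -> \sum_x2 P x2 = 1 ->
  wt b r eps I P x false = 1 - wt b r eps I P x true.
Proof.
move=> he hR hP.
suff : wt b r eps I P x false + wt b r eps I P x true = 1.
  by move=> <-; rewrite addrK.
rewrite /wt -big_split /=.
rewrite (eq_bigr (fun y => \sum_(x2 : 'I_v) P x2 * @rpbd_Q R v b r eps Y I x2 y)); last first.
  move=> y _; rewrite -mulrDr.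
  by case: (y \in Isec I x) => /=; rewrite ?mulr1 ?mulr0 ?addr0 ?add0r ?mulr1.
rewrite exchange_big /= -hP; apply eq_bigr => x2 _.
by rewrite -mulr_sumr (Qsum x2 he hR) mulr1.
Qed.

Lemma law_gen (R : realType) (v n b r l : nat) (eps : R) (Y : finType) (I : {set 'I_v * Y})
  (P : {ffun 'I_v -> R}) (x : 'I_v) (z : R) :
  0 < eps -> is_RPBD b r l I -> \sum_x2 P x2 = 1 ->
  @est_law R v n b r l eps Y I P x z =
  \sum_(bs : {ffun 'I_n -> bool})
     (\prod_(i < n) (if bs i then \sum_x2 P x2 * @qin R v b r eps Y I x x2
                     else 1 - \sum_x2 P x2 * @qin R v b r eps Y I x x2))
     * ((phi n b r l eps #|[set i | bs i]| == z) : bool)%:R.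
Proof.
move=> he hR hP; rewrite law_form; apply: eq_bigr => bs _; congr (_ * _).
apply: eq_bigr => i _; case: (bs i); first exact: wt_true.
by rewrite (wt_false x he hR hP) wt_true.
Qed.

Lemma F0 (R : realType) (n : nat) (w : bool -> R) (g : nat -> R) :
  (forall k, g k = g 0%N -> k = 0%N) ->
  \sum_(bs : {ffun 'I_n -> bool}) (\prod_(i < n) w (bs i)) *
     ((g #|[set i | bs i]| == g 0%N) : bool)%:R = w false ^+ n.
Proof.
move=> hg.
have E : forall bs : {ffun 'I_n -> bool},
    (g #|[set i | bs i]| == g 0%N) = (bs == [ffun=> false]).
  move=> bs; apply/eqP/eqP => [/hg /eqP|->].
    rewrite cards_eq0 => /eqP H; apply/ffunP => i; rewrite ffunE.
    by move/setP: H => /(_ i); rewrite !inE => ->.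
  by congr g; apply/eqP; rewrite cards_eq0; apply/eqP/setP => i; rewrite !inE ffunE.
rewrite (bigD1 [ffun=> false]) //= E eqxx mulr1 [X in _ + X]big1 ?addr0.
  rewrite (eq_bigr (fun=> w false)); last by move=> i _; rewrite ffunE.
  by rewrite prodr_const card_ord.
by move=> bs /negbTE ne; rewrite E ne mulr0.
Qed.

Lemma Fsupp (R : realType) (n : nat) (w : bool -> R) (g : nat -> R) (z : R) :
  \sum_(bs : {ffun 'I_n -> bool}) (\prod_(i < n) w (bs i)) *
     ((g #|[set i | bs i]| == z) : bool)%:R != 0 -> exists k, z = g k.
Proof.
apply: contraNP => H; apply/eqP; rewrite big1 // => bs _.
case: eqP => [E|_]; last by rewrite mulr0.
by exfalso; apply: H; exists #|[set i | bs i]|.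
Qed.

Lemma key (R : realType) (n : nat) (w w' : bool -> R) (g g' : nat -> R) :
  (0 < n)%N -> 0 < w false -> 0 < w' false ->
  (forall k, g k = g 0%N -> k = 0%N) -> (forall k, g 0%N <= g k) ->
  (forall k, g' k = g' 0%N -> k = 0%N) -> (forall k, g' 0%N <= g' k) ->
  (forall z, \sum_(bs : {ffun 'I_n -> bool}) (\prod_(i < n) w (bs i)) *
     ((g #|[set i | bs i]| == z) : bool)%:R =
   \sum_(bs : {ffun 'I_n -> bool}) (\prod_(i < n) w' (bs i)) *
     ((g' #|[set i | bs i]| == z) : bool)%:R) ->
  g 0%N = g' 0%N /\ w false = w' false.
Proof.
move=> hn hw hw' hg1 hg2 hg1' hg2' HF.
have A : g' 0%N <= g 0%N.
  have : w false ^+ n != 0 by rewrite expf_neq0 // gt_eqF.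
  rewrite -(F0 n w hg1) HF => /Fsupp [k ->]; exact: hg2'.
have B : g 0%N <= g' 0%N.
  have : w' false ^+ n != 0 by rewrite expf_neq0 // gt_eqF.
  rewrite -(F0 n w' hg1') -HF => /Fsupp [k ->]; exact: hg2.
have E : g 0%N = g' 0%N by apply/eqP; rewrite eq_le A B.
split => //.
have := F0 n w hg1; rewrite HF E (F0 n w' hg1') => /eqP.
by rewrite eqrXn2 ?ltW // => /eqP.
Qed.

Lemma alpha_pos (R : realType) (b r : nat) (eps : R) :
  (r < b)%N -> 0 < eps -> 0 < @rpbd_alpha R b r eps.
Proof.
move=> hrb he; have e1 := pexpR_gt1 he.
have : (r%:R : R) < b%:R by rewrite ltr_nat.
have : (0 : R) <= r%:R by [].
move=> h0 h1; rewrite /rpbd_alpha mul1r invr_gt0; nra.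
Qed.

Lemma phi_diff (R : realType) (n b r l : nat) (eps : R) k :
  (l < r)%N -> (r < b)%N -> 0 < eps -> (0 < n)%N ->
  @phi R n b r l eps k - phi n b r l eps 0%N =
  k%:R / ((r%:R - l%:R) * (expR eps - 1) * (n%:R * rpbd_alpha b r eps)).
Proof.
move=> hlr hrb he hn.
have e1 := pexpR_gt1 he.
have ha := alpha_pos hrb he.
have hl : (l%:R : R) < r%:R by rewrite ltr_nat.
have hn' : (0 : R) < n%:R by rewrite ltr0n.
rewrite /phi; field.
by rewrite !gt_eqF // ?subr_gt0.
Qed.

Lemma phi_ge (R : realType) (n b r l : nat) (eps : R) k :
  (l < r)%N -> (r < b)%N -> 0 < eps -> (0 < n)%N ->
  @phi R n b r l eps 0%N <= phi n b r l eps k.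
Proof.
move=> hlr hrb he hn; rewrite -subr_ge0 phi_diff //.
have e1 := pexpR_gt1 he.
have ha := alpha_pos hrb he.
have hl : (l%:R : R) < r%:R by rewrite ltr_nat.
have hn' : (0 : R) < n%:R by rewrite ltr0n.
have hrl : (0:R) < r%:R - l%:R by rewrite subr_gt0.
have he1 : (0:R) < expR eps - 1 by rewrite subr_gt0.
have hd : (0:R) < (r%:R - l%:R) * (expR eps - 1) * (n%:R * rpbd_alpha b r eps) :=
  mulr_gt0 (mulr_gt0 hrl he1) (mulr_gt0 hn' ha).
by rewrite divr_ge0 ?ler0n ?ltW.
Qed.

Lemma phi_inj (R : realType) (n b r l : nat) (eps : R) k :
  (l < r)%N -> (r < b)%N -> 0 < eps -> (0 < n)%N ->
  @phi R n b r l eps k = phi n b r l eps 0%N -> k = 0%N.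
Proof.
move=> hlr hrb he hn /eqP; rewrite -subr_eq0 phi_diff //.
have e1 := pexpR_gt1 he.
have ha := alpha_pos hrb he.
have hl : (l%:R : R) < r%:R by rewrite ltr_nat.
have hn' : (0 : R) < n%:R by rewrite ltr0n.
rewrite mulf_eq0 invr_eq0 pnatr_eq0 => /orP[/eqP //|].
have hrl : (0:R) < r%:R - l%:R by rewrite subr_gt0.
have he1 : (0:R) < expR eps - 1 by rewrite subr_gt0.
have hd : (0:R) < (r%:R - l%:R) * (expR eps - 1) * (n%:R * rpbd_alpha b r eps) :=
  mulr_gt0 (mulr_gt0 hrl he1) (mulr_gt0 hn' ha).
by rewrite gt_eqF.
Qed.

Lemma phi0 (R : realType) (n b r l : nat) (eps : R) :
  @phi R n b r l eps 0%N = 1 / ((r%:R - l%:R) * (expR eps - 1)) * - (l%:R * expR eps + r%:R - l%:R).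
Proof. by rewrite /phi mulr0n mul0r sub0r. Qed.

Lemma cross (R : realType) (D D' X X' : R) : D != 0 -> D' != 0 ->
  1 / D * X = 1 / D' * X' -> X * D' = X' * D.
Proof.
move=> h h' H.
transitivity (1 / D * X * D * D'); first by field.
by rewrite H; field.
Qed.

Lemma D_pos (R : realType) (b r : nat) (eps : R) :
  (r < b)%N -> 0 < eps -> 0 < r%:R * expR eps + b%:R - r%:R.
Proof.
move=> hrb he; have e1 := pexpR_gt1 he.
have : (r%:R : R) < b%:R by rewrite ltr_nat.
have : (0 : R) <= r%:R by [].
move=> h0 h1; nra.
Qed.

Lemma qin_scale (R : realType) (v b r l b' r' l' : nat) (eps t : R) (Y Y' : finType)
  (I : {set 'I_v * Y}) (I' : {set 'I_v * Y'}) x x2 :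
  0 < eps -> is_RPBD b r l I -> is_RPBD b' r' l' I' -> 0 < t ->
  (b'%:R : R) = t * b%:R -> (r'%:R : R) = t * r%:R -> (l'%:R : R) = t * l%:R ->
  @qin R v b r eps Y I x x2 = @qin R v b' r' eps Y' I' x x2.
Proof.
move=> he hR hR' ht Hb Hr Hl.
have hrb : (r < b)%N by case: hR => [[]].
have hD := D_pos hrb he.
rewrite (qin_val _ _ _ hR) (qin_val _ _ _ hR') /rpbd_alpha.
case: eqP => _; rewrite Hb Hr ?Hl; field; (apply/andP; split; last by rewrite gt_eqF);
  (rewrite (_ : t * r%:R * expR eps + t * b%:R - t * r%:R = t * (r%:R * expR eps + b%:R - r%:R)); last by ring);
  by rewrite mulf_neq0 // gt_eqF.
Qed.

Lemma phi_scale (R : realType) (n b r l b' r' l' : nat) (eps t : R) k :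
  0 < eps -> (l < r)%N -> (r < b)%N -> (0 < n)%N -> 0 < t ->
  (b'%:R : R) = t * b%:R -> (r'%:R : R) = t * r%:R -> (l'%:R : R) = t * l%:R ->
  @phi R n b r l eps k = phi n b' r' l' eps k.
Proof.
move=> he hlr hrb hn ht Hb Hr Hl.
have hD := D_pos hrb he.
have e1 := pexpR_gt1 he.
have hl : (l%:R : R) < r%:R by rewrite ltr_nat.
have hn' : (0 : R) < n%:R by rewrite ltr0n.
have hrl : (0:R) < r%:R - l%:R by rewrite subr_gt0.
have he1 : (0:R) < expR eps - 1 by rewrite subr_gt0.
rewrite /phi /rpbd_alpha Hb Hr Hl; field.
rewrite (_ : t * r%:R * expR eps + t * b%:R - t * r%:R = t * (r%:R * expR eps + b%:R - r%:R)); last by ring.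
rewrite (_ : t * r%:R - t * l%:R = t * (r%:R - l%:R)); last by ring.
by rewrite !mulf_neq0 ?gt_eqF.
Qed.

Unset Implicit Arguments.

Theorem theorem7 (R : realType) (v n b r l b' r' l' : nat) (eps : R)
  (Y Y' : finType) (I : {set 'I_v * Y}) (I' : {set 'I_v * Y'}) :
  (1 <= v)%N -> (1 <= n)%N -> 0 < eps ->
  @is_RPBD v b r l Y I -> @is_RPBD v b' r' l' Y' I' ->
  (@marg_equiv R v n eps Y I b r l Y' I' b' r' l' <->
   exists t : R, 0 < t /\
     [/\ (b'%:R : R) = t * b%:R, (r'%:R : R) = t * r%:R & (l'%:R : R) = t * l%:R]).
Proof.
move=> hv hn he HR HR'.
have [[_ hlr hrb] _ _ _] := HR.
have [[_ hlr' hrb'] _ _ _] := HR'.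
have e1 := pexpR_gt1 he.
split; last first.
  move=> [t [ht [Hb Hr Hl]]] P pv x z.
  have hP := pv.2.
  rewrite (law_gen n x z he HR hP) (law_gen n x z he HR' hP).
  have Hp : \sum_x2 P x2 * @qin R v b r eps Y I x x2 = \sum_x2 P x2 * @qin R v b' r' eps Y' I' x x2.
    by apply eq_bigr => x2 _; rewrite (qin_scale x x2 he HR HR' ht Hb Hr Hl).
  apply eq_bigr => bs _.
  by rewrite Hp (phi_scale _ he hlr hrb hn ht Hb Hr Hl).
move=> ME.
pose x0 : 'I_v := Ordinal hv.
pose P0 : {ffun 'I_v -> R} := [ffun x => ((x == x0) : bool)%:R].
have hP0 : \sum_x P0 x = 1.
  rewrite (bigD1 x0) //= ffunE eqxx big1 ?addr0 // => x /negbTE.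
  by rewrite ffunE => ->.
have pv : prob_vec P0 by split => // x; rewrite ffunE ler0n.
have pin : forall (b r : nat) (Y : finType) (I : {set 'I_v * Y}),
    \sum_x2 P0 x2 * @qin R v b r eps Y I x0 x2 = @qin R v b r eps Y I x0 x0.
  move=> b0 r0 Y0 I0.
  rewrite (bigD1 x0) //= ffunE eqxx mul1r big1 ?addr0 // => x /negbTE.
  by rewrite ffunE => ->; rewrite mul0r.
set p := @qin R v b r eps Y I x0 x0.
set p' := @qin R v b' r' eps Y' I' x0 x0.
have HF : forall z,
  \sum_(bs : {ffun 'I_n -> bool}) (\prod_(i < n) (fun be : bool => if be then p else 1 - p) (bs i)) *
     ((phi n b r l eps #|[set i | bs i]| == z) : bool)%:R =
  \sum_(bs : {ffun 'I_n -> bool}) (\prod_(i < n) (fun be : bool => if be then p' else 1 - p') (bs i)) *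
     ((phi n b' r' l' eps #|[set i | bs i]| == z) : bool)%:R.
  move=> z; have := ME P0 pv x0 z.
  by rewrite (law_gen n x0 z he HR hP0) (law_gen n x0 z he HR' hP0) !pin.
have wpos : forall (b r l : nat) (Y : finType) (I : {set 'I_v * Y}), is_RPBD b r l I ->
    0 < 1 - @qin R v b r eps Y I x0 x0.
  move=> b0 r0 l0 Y0 I0 H0; have [[_ _ h0] _ _ _] := H0.
  have hD := D_pos h0 he.
  rewrite (qin_val _ _ _ H0) eqxx /rpbd_alpha.
  rewrite (_ : 1 - _ = (b0%:R - r0%:R) / (r0%:R * expR eps + b0%:R - r0%:R)); last by field; rewrite gt_eqF.
  by rewrite divr_gt0 // subr_gt0 ltr_nat.
have [E1 E2] := key (w := fun be : bool => if be then p else 1 - p)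
   (w' := fun be : bool => if be then p' else 1 - p') hn (wpos _ _ _ _ _ HR) (wpos _ _ _ _ _ HR')
   (fun k => @phi_inj R n b r l eps k hlr hrb he hn) (fun k => phi_ge k hlr hrb he hn)
   (fun k => @phi_inj R n b' r' l' eps k hlr' hrb' he hn) (fun k => phi_ge k hlr' hrb' he hn) HF.
have hD := D_pos hrb he.
have hD' := D_pos hrb' he.
have hl0 : (l%:R : R) < r%:R by rewrite ltr_nat.
have hl0' : (l'%:R : R) < r'%:R by rewrite ltr_nat.
have hrl : (0:R) < r%:R - l%:R by rewrite subr_gt0.
have hrl' : (0:R) < r'%:R - l'%:R by rewrite subr_gt0.
have he1 : (0:R) < expR eps - 1 by rewrite subr_gt0.
have hr0 : (0:R) < r%:R by apply: le_lt_trans hl0.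
have hr0' : (0:R) < r'%:R by apply: le_lt_trans hl0'.
move: E2; rewrite /p /p' (qin_val _ _ _ HR) (qin_val _ _ _ HR') eqxx /rpbd_alpha.
move/addrI/oppr_inj/cross; rewrite !gt_eqF // => /(_ isT isT) E2.
move: E1; rewrite !phi0 => /cross; rewrite !gt_eqF ?mulr_gt0 // => /(_ isT isT) E1.
have k1 : r%:R * b'%:R = r'%:R * b%:R :> R.
  have h : expR eps * (r%:R * b'%:R - r'%:R * b%:R) =
    (r%:R * expR eps + r%:R - r%:R) * (r'%:R * expR eps + b'%:R - r'%:R) -
    (r'%:R * expR eps + r'%:R - r'%:R) * (r%:R * expR eps + b%:R - r%:R) by ring.
  move: h; rewrite E2 subrr => /eqP; rewrite mulf_eq0 gt_eqF ?expR_gt0 //= subr_eq0.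
  by move/eqP.
have k2 : r%:R * l'%:R = r'%:R * l%:R :> R.
  have h : (expR eps - 1) * expR eps * (r%:R * l'%:R - r'%:R * l%:R) =
    - (l%:R * expR eps + r%:R - l%:R) * ((r'%:R - l'%:R) * (expR eps - 1)) -
    - (l'%:R * expR eps + r'%:R - l'%:R) * ((r%:R - l%:R) * (expR eps - 1)) by ring.
  move: h; rewrite E1 subrr => /eqP; rewrite !mulf_eq0 (gt_eqF he1) (gt_eqF (expR_gt0 eps)) /= subr_eq0.
  by move/eqP.
have rne : (r%:R : R) != 0 by rewrite gt_eqF.
exists (r'%:R / r%:R); split; first by rewrite divr_gt0.
split.
- by rewrite mulrAC -k1 mulrAC mulfV ?mul1r.
- by rewrite divfK.
- by rewrite mulrAC -k2 mulrAC mulfV ?mul1r.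
Qed.
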